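(* Let $G$ be a mixed signed, directed graph on vertices $\{1,\dots,n\}$ and suppose $v^*\in(\mathbb{R}^n)^*$ satisfies $\langle v^*,x\rangle=0$ for all $x\in\mathcal{P}_G$. Let $\widetilde{G}_1,\dots,\widetilde{G}_r$ be the bipartite components of the augmented signed graph $\widetilde G$, with bipartitions $V(\widetilde{G}_s)=\widetilde L_s\cup\widetilde R_s$. Then $v^*$ is a linear combination of $e^*_{\pi(\widetilde L_1)}-e^*_{\pi(\widetilde R_1)},\dots,e^*_{\pi(\widetilde L_r)}-e^*_{\pi(\widetilde R_r)}$.
   Context: A mixed signed, directed graph $G$ on vertex set $\{1,\dots,n\}$ has a set of signed edges $+ij$ or $-ij$ (loops $\pm ii$ allowed) and directed edges $(i,j)$ with $i\ne j$; between a pair of vertices any subset of $+ij,-ij,(i,j),(j,i)$ may occur. Define $\rho(\pm ij)=\pm(e_i+e_j)$ (so $\rho(\pm ii)=\pm2e_i$) and $\rho((i,j))=e_j-e_i$ in $\mathbb{R}^n$; $\mathcal{P}_G=\mathrm{conv}(\rho(E(G)))$. The augmented signed graph $\widetilde G$ is the signed graph obtained by replacing each directed edge $(i,j)$ by a new (artificial) vertex $t_{(i,j)}$ and the two edges $-i\,t_{(i,j)}$ and $+t_{(i,j)}\,j$. For a set $S$ of vertices of $\widetilde G$, $\pi(S)=S\cap\{1,\dots,n\}$ (the non-artificial vertices of $S$). A component of a signed graph is a maximal connected subgraph (isolated vertices are components); it is bipartite if its vertex set can be partitioned into $L,R$ (one possibly empty) such that every edge has exactly one endpoint in each (a component with a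 loop is not bipartite). For $S\subseteq\{1,\dots,n\}$, $e_S^*=\sum_{i\in S}e_i^*$ in the dual basis. *)

(* Defs.v *)
From HB Require Import structures.
From mathcomp Require Import all_boot all_order all_algebra.
Set Implicit Arguments. Unset Strict Implicit. Unset Printing Implicit Defensive.
Import Order.TTheory GRing.Theory Num.Theory.
Local Open Scope ring_scope.

(* A mixed signed, directed graph on {1..n} (here 'I_n) is given by
   - S : {set bool * 'I_n * 'I_n}: signed edges; (true,i,j) is +ij, (false,i,j)
     is -ij (the pair is unordered: (b,i,j) and (b,j,i) denote the same edge;
     i = j gives a loop);
   - D : {set 'I_n * 'I_n}: directed edges (i,j), with i <> j. *)

Definition evec (R : nzRingType) n (i : 'I_n) : 'rV[R]_n := \row_k (k == i)%:R.

Definition rho_signed (R : nzRingType) n (e : bool * 'I_n * 'I_n) : 'rV[R]_n :=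
  (if e.1.1 then 1 else -1) *: (evec R e.1.2 + evec R e.2).

Definition rho_directed (R : nzRingType) n (d : 'I_n * 'I_n) : 'rV[R]_n :=
  evec R d.2 - evec R d.1.

Definition rho_image (R : nzRingType) n (S : {set bool * 'I_n * 'I_n})
  (D : {set 'I_n * 'I_n}) (x : 'rV[R]_n) : Prop :=
  (exists2 e, e \in S & x = rho_signed R e) \/
  (exists2 d, d \in D & x = rho_directed R d).

Definition in_conv (R : numDomainType) n (P : 'rV[R]_n -> Prop) (x : 'rV[R]_n) : Prop :=
  exists (m : nat) (p : 'I_m -> 'rV[R]_n) (w : 'I_m -> R),
    [/\ forall k, P (p k), forall k, 0 <= w k, \sum_k w k = 1 &
        x = \sum_k w k *: p k].

Definition polytope (R : numDomainType) n (S : {set bool * 'I_n * 'I_n})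
  (D : {set 'I_n * 'I_n}) : 'rV[R]_n -> Prop :=
  in_conv (rho_image S D).

(* pairing <v*, x> of a dual vector (given by coordinates in the dual basis)
   with a vector *)
Definition pairing (R : nzRingType) n (v x : 'rV[R]_n) : R := \sum_i v 0 i * x 0 i.

Definition dual_ind (R : nzRingType) n (T : {set 'I_n}) : 'rV[R]_n :=
  \row_i (i \in T)%:R.

(* vertices of the augmented graph: original vertices inl i, and one
   artificial vertex inr d = t_d for each directed edge d in D *)
Definition aug_vertex n (D : {set 'I_n * 'I_n}) : finType :=
  ('I_n + {d : 'I_n * 'I_n | d \in D})%type.

Definition aug_edges n (S : {set bool * 'I_n * 'I_n}) (D : {set 'I_n * 'I_n})
  : {set bool * aug_vertex D * aug_vertex D} :=
  [set x : bool * aug_vertex D * aug_vertex D |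
     [|| [exists e in S, x == (e.1.1, inl e.1.2, inl e.2)],
         [exists d : {d : 'I_n * 'I_n | d \in D}, x == (false, inl (val d).1, inr d)]
       | [exists d : {d : 'I_n * 'I_n | d \in D}, x == (true, inr d, inl (val d).2)]]].

Arguments aug_edges {n} S D.

Definition aug_adj n (S : {set bool * 'I_n * 'I_n}) (D : {set 'I_n * 'I_n})
  : rel (aug_vertex D) :=
  fun u w => [exists b, ((b, u, w) \in aug_edges S D) || ((b, w, u) \in aug_edges S D)].

Arguments aug_adj {n} S D.

Definition is_aug_component n (S : {set bool * 'I_n * 'I_n}) (D : {set 'I_n * 'I_n})
  (C : {set aug_vertex D}) : Prop :=
  exists u, C = [set w | connect (aug_adj S D) u w].

Arguments is_aug_component {n} S D C.

Definition is_bipartition n (S : {set bool * 'I_n * 'I_n}) (D : {set 'I_n * 'I_n})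
  (C L R : {set aug_vertex D}) : Prop :=
  [/\ L :|: R = C, [disjoint L & R] &
      forall u w, aug_adj S D u w -> u \in C ->
        ((u \in L) && (w \in R)) || ((u \in R) && (w \in L))].

Arguments is_bipartition {n} S D C L R.

Definition is_bipartite_component n (S : {set bool * 'I_n * 'I_n})
  (D : {set 'I_n * 'I_n}) (C : {set aug_vertex D}) : Prop :=
  is_aug_component S D C /\ exists L R, is_bipartition S D C L R.

Arguments is_bipartite_component {n} S D C.

Definition proj_orig n (D : {set 'I_n * 'I_n}) (T : {set aug_vertex D}) : {set 'I_n} :=
  [set i : 'I_n | (inl i : aug_vertex D) \in T].

(* Main.v *)
Require Import Defs.
From HB Require Import structures.
From mathcomp Require Import all_boot all_order all_algebra.
From mathcomp Require Import lra.
Import Order.TTheory GRing.Theory Num.Theory.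
Local Open Scope ring_scope.

Lemma connect_inv (T : finType) (e : rel T) (I : T -> Prop) :
  (forall x y, I x -> e x y -> I y) -> forall x y, connect e x y -> I x -> I y.
Proof.
move=> H x y /connectP [p pth ->]; elim: p x pth => [|z p IH] x //= /andP [exz pth] Ix.
by apply: IH pth _; exact: H Ix exz.
Qed.

Lemma bip_const (R : numDomainType) (T : finType) (e : rel T) (w : T -> R)
  (hw : forall x y, e x y -> w y = - w x) (C L Rr : {set T})
  (hC : exists u, C = [set y | connect e u y])
  (h1 : L :|: Rr = C) (h2 : [disjoint L & Rr])
  (h3 : forall u y, e u y -> u \in C -> ((u \in L) && (y \in Rr)) || ((u \in Rr) && (y \in L))) :
  exists c, forall x, x \in C -> (x \in L -> w x = c) /\ (x \in Rr -> w x = - c).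
Proof.
case: hC => u hCu; rewrite {}hCu in h1 h3 *.
have dis : forall z, z \in L -> z \in Rr -> False.
  by move=> z hL hR; move: (disjointFr h2 hL); rewrite hR.
exists (if u \in L then w u else - w u).
pose I x := connect e u x /\ (x \in L -> w x = (if u \in L then w u else - w u)) /\
              (x \in Rr -> w x = - (if u \in L then w u else - w u)).
move=> x; rewrite inE => hux.
suff : I x by case=> _ [].
have step : forall y z, I y -> e y z -> I z.
  move=> y z [huy [hyL hyR]] eyz.
  have Cy : y \in L :|: Rr by rewrite h1 inE.
  split; first exact: connect_trans huy (connect1 eyz).
  have Cy2 : y \in [set y | connect e u y] by rewrite inE.
  move: (h3 _ _ eyz Cy2) => /orP [/andP [yL zR] | /andP [yR zL]].
  + split; first by move=> zL; case: (dis z).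
    by move=> _; rewrite (hw _ _ eyz) (hyL yL).
  + split; last by move=> zR; case: (dis z).
    by move=> _; rewrite (hw _ _ eyz) (hyR yR) opprK.
have base : I u.
  split; first exact: connect0.
  have Cu : u \in L :|: Rr by rewrite h1 inE connect0.
  case: (boolP (u \in L)) => uL.
  + by split=> // uR; case: (dis u).
  + split=> // uR; first by rewrite opprK.
exact: (@connect_inv _ _ I step u x hux base).
Qed.

Section Main.
Variables (R : realFieldType) (n : nat).

Lemma pairingD (v x y : 'rV[R]_n) : pairing v (x + y) = pairing v x + pairing v y.
Proof. by rewrite /pairing -big_split; apply: eq_bigr => k _; rewrite mxE mulrDr. Qed.

Lemma pairingN (v x : 'rV[R]_n) : pairing v (- x) = - pairing v x.
Proof. by rewrite /pairing -sumrN; apply: eq_bigr => k _; rewrite mxE mulrN. Qed.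

Lemma pairingZ (v x : 'rV[R]_n) a : pairing v (a *: x) = a * pairing v x.
Proof. by rewrite /pairing mulr_sumr; apply: eq_bigr => k _; rewrite mxE mulrCA. Qed.

Lemma pairing_evec (v : 'rV[R]_n) i : pairing v (evec R i) = v 0 i.
Proof.
rewrite /pairing (bigD1 i) //= mxE eqxx mulr1 big1 ?addr0 // => k /negbTE hk.
by rewrite mxE hk mulr0.
Qed.

End Main.

Theorem mainTheorem8 (R : realFieldType) (n : nat)
  (S : {set bool * 'I_n * 'I_n}) (D : {set 'I_n * 'I_n})
  (hD : forall d, d \in D -> d.1 != d.2)
  (v : 'rV[R]_n)
  (hv : forall x, polytope S D x -> pairing v x = 0)
  (r : nat) (C L Rt : 'I_r -> {set aug_vertex D})
  (hCinj : injective C)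
  (hCbip : forall s, is_bipartite_component S D (C s))
  (hCall : forall C', is_bipartite_component S D C' -> exists s, C' = C s)
  (hLR : forall s, is_bipartition S D (C s) (L s) (Rt s)) :
  exists c : 'I_r -> R,
    v = \sum_(s < r) c s *: (dual_ind R (proj_orig (L s)) - dual_ind R (proj_orig (Rt s))).
Proof.
have hpt : forall x, rho_image S D x -> pairing v x = 0.
  move=> x hx; apply: hv; exists 1%N, (fun _ => x), (fun _ => 1).
  by split=> //; rewrite big_ord1 ?scale1r.
pose w (x : aug_vertex D) : R :=
  match x with inl i => v 0 i | inr d => - v 0 (val d).1 end.
have hedge : forall b x y, (b, x, y) \in aug_edges S D -> w x + w y = 0.
  move=> b x y; rewrite inE => /orP [/existsP [e /andP [eS /eqP [_ -> ->]]] |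
     /orP [/existsP [d /eqP [_ -> ->]] | /existsP [d /eqP [_ -> ->]]]] /=.
  - have := hpt (rho_signed R e) (or_introl (ex_intro2 _ _ e eS erefl)).
    rewrite /rho_signed pairingZ pairingD !pairing_evec.
    by case: e.1.1 => /eqP; rewrite ?mul1r ?mulN1r ?oppr_eq0 => /eqP.
  - by rewrite subrr.
  - have := hpt (rho_directed R (val d)) (or_intror (ex_intro2 _ _ (val d) (valP d) erefl)).
    by rewrite /rho_directed pairingD pairingN !pairing_evec addrC.
have hadj : forall x y, aug_adj S D x y -> w y = - w x.
  move=> x y /existsP [b /orP [] /hedge h]; apply/eqP; rewrite -addr_eq0 ?h //.
  by rewrite addrC h.
have hsym : symmetric (aug_adj S D).
  by move=> x y; apply/existsP/existsP => [][b hb]; exists b; rewrite orbC.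
have csym := sym_connect_sym hsym.
have hpm : forall x y, connect (aug_adj S D) x y -> w y = w x \/ w y = - w x.
  move=> x y hxy; apply: (@connect_inv _ _ (fun y => w y = w x \/ w y = - w x) _ _ _ hxy).
    move=> y0 z [] h /hadj ->; rewrite h ?opprK; [right|left] => //.
  by left.
have [c hc] : exists c : 'I_r -> R, forall s x, x \in C s ->
    (x \in L s -> w x = c s) /\ (x \in Rt s -> w x = - c s).
  apply: (@fin_all_exists _ (fun _ => R) (fun s c => forall x, x \in C s -> (x \in L s -> w x = c) /\ (x \in Rt s -> w x = - c))) => s.
  case: (hCbip s) => hcomp _; case: (hLR s) => h1 h2 h3.
  have hh := @bip_const _ _ _ _ hadj _ _ _ hcomp h1 h2 h3.
  exact hh.
exists c; apply/rowP => i; rewrite summxE.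
set x : aug_vertex D := inl i.
have hterm : forall s, (c s *: (dual_ind R (proj_orig (L s)) - dual_ind R (proj_orig (Rt s)))) 0 i
    = if x \in C s then w x else 0.
  move=> s; rewrite !mxE !inE.
  case: (hLR s) => h1 h2 h3.
  have dis : forall z, z \in L s -> z \in Rt s -> False.
    by move=> z hL hR; move: (disjointFr h2 hL); rewrite hR.
  case: ifP => hin.
  + have : x \in L s :|: Rt s by rewrite h1.
    rewrite inE => /orP [] hx.
    * have -> : (x \in Rt s) = false by apply/negP => /(dis _ hx).
      by rewrite hx subr0 mulr1 (proj1 (hc s x hin) hx).
    * have -> : (x \in L s) = false by apply/negP => /dis /(_ hx).
      by rewrite hx sub0r mulrN1 (proj2 (hc s x hin) hx).
  + have -> : (x \in L s) = false.
      by apply/negP => hl; move: hin; rewrite -h1 inE hl.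
    have -> : (x \in Rt s) = false.
      by apply/negP => hl; move: hin; rewrite -h1 inE hl orbT.
    by rewrite subrr mulr0.
rewrite (eq_bigr _ (fun s _ => hterm s)).
case: (eqVneq (w x) 0) => hw0.
  rewrite big1; first exact: hw0.
  by move=> s _; case: ifP.
pose K := [set y | connect (aug_adj S D) x y].
have compeq : forall s, x \in C s -> C s = K.
  move=> s hs; case: (hCbip s) => [[u hu] _].
  move: hs; rewrite hu inE => hux.
  by apply/setP => y; rewrite !inE (same_connect csym hux).
have [s0 hs0] : exists s, K = C s.
  apply: hCall; split; first by exists x.
  exists [set y in K | w y == w x], [set y in K | w y == - w x]; split.
  - apply/setP => y; rewrite !inE; case: (boolP (connect _ x y)) => //= hy.
    by case: (hpm _ _ hy) => ->; rewrite eqxx ?orbT.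
  - apply/pred0P => y /=; rewrite !inE; apply/negP => /andP [/andP [_ /eqP h1] /andP [_ /eqP h2]].
    by apply: (negP hw0); apply/eqP; change (v 0 i = 0); lra.
  - move=> y z eyz; rewrite !inE => hy.
    have hz : connect (aug_adj S D) x z := connect_trans hy (connect1 eyz).
    rewrite hy hz (hadj _ _ eyz) /=.
    case: (hpm _ _ hy) => ->; rewrite ?opprK !eqxx ?orbT //=.
rewrite (bigD1 s0) //= big1 ?addr0.
  by rewrite -hs0 inE connect0.
move=> s hs; case: ifP => // hin.
by move: hs; rewrite (hCinj s s0) ?eqxx // (compeq _ hin) hs0.
Qed.
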